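(* For $t\in T( *,\circ,x)$ define inductively a partial operator $\mathcal{C}(t)\in\mathcal{G}(\mathtt{ALD})$ by $\mathcal{C}(x)=\mathrm{id}$, $\mathcal{C}(t_1*t_2)=\mathcal{C}(t_1)\bullet\mathrm{sh}_1(\mathcal{C}(t_2))\bullet S^{+}_{\varepsilon}\bullet\mathrm{sh}_1(\mathcal{C}(t_1))^{-1}$, and $\mathcal{C}(t_1\circ t_2)=\mathcal{C}(t_1)\bullet\mathrm{sh}_1(\mathcal{C}(t_2))\bullet A^{+}_{\varepsilon}$. Then for every $t\in T( *,\circ,x)$ there exists $p$ such that, for every sufficiently large $n$, the operator $\mathcal{C}(t)$ maps $x^{[n]}$ to $t*x^{[n-p]}$.
   Context: $T( *,\circ,x)$: terms in the single variable $x$ with binary symbols $*,\circ$. Right vines: $x^{[1]}=x$, $x^{[n]}=x*x^{[n-1]}$. Addresses are finite sequences over $\{0,1\}$, $\varepsilon$ the empty one; $t/\alpha$ is the subterm at $\alpha$ ($0$ left, $1$ right). Partial operators act on the right ($t\cdot f$), $f\bullet g$ = ''$f$ then $g$'', and $f^{-1}$ is the inverse partial map. $S^{+}_{\alpha}$ is defined on $t$ iff $t/\alpha=t_1*(t_2\,\square\,t_3)$ with $\square\in\{*,\circ\}$, and replaces this subterm by $(t_1*t_2)\,\square\,(t_1*t_3)$; $A^{+}_{\alpha}$ is defined iff $t/\alpha=t_1*(t_2*t_3)$ and replaces it by $(t_1\circ t_2)*t_3$; $S^-_\alpha,A^-_\alpha$ are the inverse partial maps. $\mathcal{G}(\mathtt{ALD})$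 is the monoid of partial maps generated by all $S^{\pm}_\alpha,A^{\pm}_\alpha$. For a partial map $f$ and address $\beta$, $\mathrm{sh}_\beta(f)$ is the partial map applying $f$ to the $\beta$-th subterm (defined iff $t/\beta$ exists and is in the domain of $f$). *)

(* Defs.v *)
From Stdlib Require Import List Arith.
Import ListNotations.

Inductive term : Type :=
  | X : term
  | Star : term -> term -> term
  | Circ : term -> term -> term.

Definition term_eq_dec : forall t u : term, {t = u} + {t <> u}.
Proof. decide equality. Defined.

(* Right vines: vine n = x^[n] for n >= 1 (vine 0 := x, junk value, never used). *)
Fixpoint vine (n : nat) : term :=
  match n with
  | 0 | 1 => X
  | S m => Star X (vine m)
  end.

(* Addresses: false = 0 (left), true = 1 (right). *)
Definition address := list bool.

(* Partial operators, acting on the right. *)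
Definition pmap := term -> option term.

Definition pid : pmap := fun t => Some t.

(* f \bullet g  =  "f then g" *)
Definition pcomp (f g : pmap) : pmap :=
  fun t => match f t with Some u => g u | None => None end.

Fixpoint sh (beta : address) (f : pmap) : pmap :=
  match beta with
  | [] => f
  | b :: beta' => fun t =>
      match t with
      | X => None
      | Star t1 t2 =>
          if b then option_map (Star t1) (sh beta' f t2)
          else option_map (fun u => Star u t2) (sh beta' f t1)
      | Circ t1 t2 =>
          if b then option_map (Circ t1) (sh beta' f t2)
          else option_map (fun u => Circ u t2) (sh beta' f t1)
      end
  end.

Definition Splus0 : pmap := fun t =>
  match t with
  | Star t1 (Star t2 t3) => Some (Star (Star t1 t2) (Star t1 t3))
  | Star t1 (Circ t2 t3) => Some (Circ (Star t1 t2) (Star t1 t3))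
  | _ => None
  end.

Definition Sminus0 : pmap := fun t =>
  match t with
  | Star (Star t1 t2) (Star t1' t3) =>
      if term_eq_dec t1 t1' then Some (Star t1 (Star t2 t3)) else None
  | Circ (Star t1 t2) (Star t1' t3) =>
      if term_eq_dec t1 t1' then Some (Star t1 (Circ t2 t3)) else None
  | _ => None
  end.

Definition Aplus0 : pmap := fun t =>
  match t with
  | Star t1 (Star t2 t3) => Some (Star (Circ t1 t2) t3)
  | _ => None
  end.

Definition Aminus0 : pmap := fun t =>
  match t with
  | Star (Circ t1 t2) t3 => Some (Star t1 (Star t2 t3))
  | _ => None
  end.

Definition Splus (a : address) : pmap := sh a Splus0.
Definition Sminus (a : address) : pmap := sh a Sminus0.
Definition Aplus (a : address) : pmap := sh a Aplus0.
Definition Aminus (a : address) : pmap := sh a Aminus0.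

(* The operator C(t), computed together with its inverse partial map
   (first component: C(t); second component: C(t)^{-1}), using
   (f.g)^{-1} = g^{-1}.f^{-1}, sh_b(f)^{-1} = sh_b(f^{-1}), (S^+)^{-1} = S^-,
   (A^+)^{-1} = A^-, id^{-1} = id. *)
Fixpoint Cop (t : term) : pmap * pmap :=
  match t with
  | X => (pid, pid)
  | Star t1 t2 =>
      let (c1, c1i) := Cop t1 in
      let (c2, c2i) := Cop t2 in
      ( pcomp c1 (pcomp (sh [true] c2) (pcomp (Splus []) (sh [true] c1i))),
        pcomp (sh [true] c1) (pcomp (Sminus []) (pcomp (sh [true] c2i) c1i)) )
  | Circ t1 t2 =>
      let (c1, c1i) := Cop t1 in
      let (c2, c2i) := Cop t2 in
      ( pcomp c1 (pcomp (sh [true] c2) (Aplus [])),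
        pcomp (Aminus []) (pcomp (sh [true] c2i) c1i) )
  end.

Definition C (t : term) : pmap := fst (Cop t).

(* Main.v *)
Require Import Defs.
From Stdlib Require Import List Arith Lia.
Import ListNotations.

Definition inv (c ci : pmap) := forall u v, c u = Some v -> ci v = Some u.

Lemma inv_pid : inv pid pid.
Proof. intros u v H; unfold pid in *; congruence. Qed.

Lemma inv_pcomp f fi g gi : inv f fi -> inv g gi -> inv (pcomp f g) (pcomp gi fi).
Proof.
  intros Hf Hg u w; unfold pcomp.
  destruct (f u) as [v|] eqn:E; [|discriminate].
  intro H. rewrite (Hg _ _ H). apply Hf; exact E.
Qed.

Lemma inv_ext c ci ci' : (forall x, ci x = ci' x) -> inv c ci -> inv c ci'.
Proof. intros E H u v Hv. rewrite <- E. apply H; exact Hv. Qed.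

Lemma pcomp_assoc f g h x : pcomp (pcomp f g) h x = pcomp f (pcomp g h) x.
Proof. unfold pcomp. destruct (f x); reflexivity. Qed.

Lemma inv_sh b f fi : inv f fi -> inv (sh b f) (sh b fi).
Proof.
  intro Hf; induction b as [|x b IH]; [exact Hf|].
  intros u v; simpl; destruct u as [|u1 u2|u1 u2]; [discriminate| |];
  destruct x.
  all: try (destruct (sh b f u2) eqn:E; simpl; [|discriminate]; intro H; injection H as <-;
        simpl; rewrite (IH _ _ E); reflexivity).
  all: destruct (sh b f u1) eqn:E; simpl; [|discriminate]; intro H; injection H as <-;
        simpl; rewrite (IH _ _ E); reflexivity.
Qed.

Lemma inv_S : inv Splus0 Sminus0.
Proof.
  intros u v; unfold Splus0, Sminus0.
  destruct u as [|u1 u2|u1 u2]; try discriminate.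
  destruct u2 as [|a b|a b]; try discriminate; intro H; injection H as <-;
  destruct (term_eq_dec u1 u1); congruence.
Qed.

Lemma inv_A : inv Aplus0 Aminus0.
Proof.
  intros u v; unfold Aplus0, Aminus0.
  destruct u as [|u1 u2|u1 u2]; try discriminate.
  destruct u2 as [|a b|a b]; try discriminate; intro H; injection H as <-; reflexivity.
Qed.

Lemma inv_S' : inv Sminus0 Splus0.
Proof.
  intros u v; unfold Splus0, Sminus0.
  destruct u as [|u1 u2|u1 u2]; try discriminate;
  destruct u1 as [|a b|a b]; try discriminate;
  destruct u2 as [|c d|c d]; try discriminate;
  destruct (term_eq_dec a c); try discriminate; subst; intro H; injection H as <-; reflexivity.
Qed.

Lemma inv_A' : inv Aminus0 Aplus0.
Proof.
  intros u v; unfold Aplus0, Aminus0.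
  destruct u as [|u1 u2|u1 u2]; try discriminate.
  destruct u1 as [|a b|a b]; try discriminate; intro H; injection H as <-; reflexivity.
Qed.

Lemma vine_S m : 1 <= m -> vine (S m) = Star X (vine m).
Proof. destruct m; [lia|reflexivity]. Qed.

Lemma main : forall t, (inv (fst (Cop t)) (snd (Cop t)) /\ inv (snd (Cop t)) (fst (Cop t))) /\
  exists p N : nat, p < N /\
    forall n : nat, N <= n -> fst (Cop t) (vine n) = Some (Star t (vine (n - p))).
Proof.
  induction t as [|t1 [[I1 J1] [p1 [N1 [Hp1 H1]]]] t2 [[I2 J2] [p2 [N2 [Hp2 H2]]]]
                 |t1 [[I1 J1] [p1 [N1 [Hp1 H1]]]] t2 [[I2 J2] [p2 [N2 [Hp2 H2]]]]].
  - simpl. split; [split; exact inv_pid|]. exists 1, 2. split; [lia|].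
    intros n Hn. unfold pid. destruct n as [|n]; [lia|].
    rewrite vine_S by lia. f_equal. f_equal. f_equal. lia.
  - cbn [Cop]. destruct (Cop t1) as [c1 c1i]; destruct (Cop t2) as [c2 c2i]; cbn [fst snd] in *.
    split; [split|].
    + eapply inv_ext.
      2:{ apply inv_pcomp; [exact I1|]. apply inv_pcomp; [apply inv_sh; exact I2|].
          apply inv_pcomp; [exact inv_S|]. apply inv_sh; exact J1. }
      intro x. rewrite !pcomp_assoc. reflexivity.
    + eapply inv_ext.
      2:{ repeat apply inv_pcomp; try apply inv_sh; eassumption || apply inv_S' || apply inv_A'. }
      intro x. rewrite !pcomp_assoc. reflexivity.
    + exists p2, (N1 + N2 + p1 + p2 + 1). split; [lia|].
      intros n Hn. unfold pcomp. rewrite H1 by lia. simpl.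
      rewrite H2 by lia. simpl.
      assert (E : c1i (Star t1 (vine (n - p1 - p2))) = Some (vine (n - p2))).
      { apply I1. replace (n - p1 - p2) with (n - p2 - p1) by lia. apply H1. lia. }
      rewrite E. reflexivity.
  - cbn [Cop]. destruct (Cop t1) as [c1 c1i]; destruct (Cop t2) as [c2 c2i]; cbn [fst snd] in *.
    split; [split|].
    + eapply inv_ext.
      2:{ apply inv_pcomp; [exact I1|]. apply inv_pcomp; [apply inv_sh; exact I2|].
          exact inv_A. }
      intro x. rewrite !pcomp_assoc. reflexivity.
    + eapply inv_ext.
      2:{ repeat apply inv_pcomp; try apply inv_sh; eassumption || apply inv_S' || apply inv_A'. }
      intro x. rewrite !pcomp_assoc. reflexivity.
    + exists (p1 + p2), (N1 + N2 + p1 + p2 + 1). split; [lia|].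
      intros n Hn. unfold pcomp. rewrite H1 by lia. simpl.
      rewrite H2 by lia. simpl. replace (n - (p1 + p2)) with (n - p1 - p2) by lia. reflexivity.
Qed.

Theorem lemma3p4 : forall t : term,
  exists p N : nat, p < N /\
    forall n : nat, N <= n -> C t (vine n) = Some (Star t (vine (n - p))).
Proof.
  intro t. exact (proj2 (main t)).
Qed.
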